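(* Let $K=\mathbb{Z}/3$, let $G$ be a simple graph with edges $e_1,\dots,e_s$ ($s\ge1$), and let $d\ge0$. With $\mathcal{B}_d$ and $\mathcal{J}_d$ as in the context, the map $\mathcal{B}_d\to\mathcal{J}_d$, $t^\gamma\mapsto\{e_i: i\in\operatorname{supp}(\gamma)\}$, is well defined and a bijection. In particular, $$\dim_K C_X(d)=\sum_{i\ge0}|\mathcal{J}_{d-2i}|.$$
   Context: Let $G$ be a simple graph with vertex set $\{1,\dots,n\}$ and a fixed ordering $e_1,\dots,e_s$ of its edges; edge $e_k$ is identified with the variable $t_k$ of $S=K[t_1,\dots,t_s]$, $K$ a finite field. Let $X\subseteq\mathbb{P}^{s-1}$ be the image of the projective torus $\{(x_1:\dots:x_n): x_i\neq0\}\subseteq\mathbb{P}^{n-1}$ under the map whose $k$-th coordinate is $x_ix_j$ when $e_k=\{i,j\}$. Order $X=\{P_1,\dots,P_m\}$. For $d\ge0$, $C_X(d)\subseteq K^m$ is the image of $S_d$ under $f\mapsto \big(f(P_1)/t_1^d(P_1),\dots,f(P_m)/t_1^d(P_m)\big)$. $I(X)$ is the ideal generated by homogeneous polynomials vanishing on $X$. For $\gamma\in\mathbb{N}^s$, $t^\gamma=t_1^{\gamma_1}\cdots t_s^{\gamma_s}$. $\mathcal{B}_d$ is the set of monomials of degree $d$ not divisible by the leading term, in graded reverse lexicographic order with $t_1>\dots>t_s$, of any polynomial in $(I(X),t_s^2)$; $\mathcal{B}_d=\emptyset$ for $d<0$. An Eulerian subgraph of $G$ is a subgraph in which every vertex has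 even degree; its last edge is its edge $e_i$ of largest index $i$. A set $J\subseteq E_G$ is a parity join if $|J\cap E_C|\le |E_C|/2$ for every Eulerian subgraph $C\subseteq G$ with an even number of edges. For $d\ge0$, $\mathcal{J}_d$ is the set of parity joins $J$ with $|J|=d$ such that $J$ contains the last edge of every Eulerian subgraph $C$ (with an even number of edges) for which $|J\cap E_C|=|E_C|/2$; $\mathcal{J}_d=\emptyset$ for $d<0$. *)

(* Defs.v *)
From HB Require Import structures.
From mathcomp Require Import all_boot all_order all_algebra.
From mathcomp Require Import mpoly.
Set Implicit Arguments. Unset Strict Implicit. Unset Printing Implicit Defensive.
Import Order.TTheory GRing.Theory.
Local Open Scope ring_scope.

Notation K := 'F_3.

Section Defs.
Variables (n s : nat) (E : 'I_s -> {set 'I_n}).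
(* Vertices are 'I_n (vertex i+1 of the paper is i), edges are indexed by
   'I_s: edge e_(k+1) of the paper is E k, an unordered pair of vertices. *)

(* k-th coordinate of a vector (0-based), 0 if out of range *)
Definition coordk (v : 'I_s -> K) (k : nat) : K :=
  if insub k is Some i then v i else 0.

(* variable t_(k+1) of S (0-based index k), 0 if out of range *)
Definition tvar (k : nat) : {mpoly K[s]} :=
  if insub k is Some i then 'X_i else 0.

(* the monomial map on the torus: k-th coordinate x_i x_j if E k = {i,j} *)
Definition monmap (x : {ffun 'I_n -> K}) : {ffun 'I_s -> K} :=
  [ffun k => \prod_(v in E k) x v].

(* the canonical representative of a projective point with nonzero first
   coordinate: scale so that the first coordinate is 1 *)
Definition normalize (v : {ffun 'I_s -> K}) : {ffun 'I_s -> K} :=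
  [ffun k => v k / coordk v 0].

(* the projective torus of P^(n-1) and its image X in P^(s-1); points of X
   are represented by their normalized representatives *)
Definition torus : {set {ffun 'I_n -> K}} := [set x : {ffun 'I_n -> K} | [forall i, x i != 0]].
Definition Xset : {set {ffun 'I_s -> K}} := [set normalize (monmap x) | x in torus].

Definition Xpt (i : 'I_#|Xset|) : {ffun 'I_s -> K} := enum_val i.

Definition evrow (d : nat) (f : {mpoly K[s]}) : 'rV[K]_#|Xset| :=
  \row_(i < #|Xset|) (f.@[Xpt i] / (coordk (Xpt i) 0) ^+ d).

Definition monos (d : nat) : seq 'X_{1..s} :=
  [seq val m | m <- enum [set: 'X_{1..s < d.+1}] & mdeg (val m) == d].

(* C_X(d) = image of S_d under the evaluation map *)
Definition CX (d : nat) : {vspace 'rV[K]_#|Xset|} :=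
  <<[seq evrow d 'X_[m] | m <- monos d]>>%VS.

Definition is_homog (d : nat) (f : {mpoly K[s]}) : Prop :=
  forall m, m \in msupp f -> mdeg m = d.

Definition vanishes_on_X (f : {mpoly K[s]}) : Prop :=
  forall P, P \in Xset -> f.@[P] = 0.

(* membership in the ideal (I(X), t_s^2): I(X) is generated by the
   homogeneous polynomials vanishing on X *)
Definition in_IXts2 (f : {mpoly K[s]}) : Prop :=
  exists (gh : seq ({mpoly K[s]} * {mpoly K[s]})) (g0 : {mpoly K[s]}),
    (forall p, p \in gh -> (exists e, is_homog e p.2) /\ vanishes_on_X p.2) /\
    f = \sum_(p <- gh) p.1 * p.2 + g0 * (tvar s.-1) ^+ 2.

(* graded reverse lexicographic order with t_1 > ... > t_s:
   grevlex_lt a b  means  t^a < t^b *)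
Definition grevlex_lt (a b : 'X_{1..s}) : Prop :=
  (mdeg a < mdeg b)%N \/
  (mdeg a = mdeg b /\ exists k : 'I_s,
      (b k < a k)%N /\ forall j : 'I_s, (k < j)%N -> a j = b j).

Definition leading_mono (m : 'X_{1..s}) (f : {mpoly K[s]}) : Prop :=
  m \in msupp f /\ forall m', m' \in msupp f -> m' <> m -> grevlex_lt m' m.

Definition mdivides (a b : 'X_{1..s}) : Prop := forall i, (a i <= b i)%N.

Definition Bd (d : nat) (m : 'X_{1..s}) : Prop :=
  mdeg m = d /\
  ~ (exists f lm, in_IXts2 f /\ f != 0 /\ leading_mono lm f /\ mdivides lm m).

Definition suppset (m : 'X_{1..s}) : {set 'I_s} := [set i | (0 < m i)%N].

Definition vdeg (C : {set 'I_s}) (v : 'I_n) : nat := #|[set i in C | v \in E i]|.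

Definition eulerian (C : {set 'I_s}) : bool :=
  (C != set0) && [forall v, ~~ odd (vdeg C v)].

Definition even_eulerian (C : {set 'I_s}) : bool := eulerian C && ~~ odd #|C|.

Definition parity_join (J : {set 'I_s}) : bool :=
  [forall C, even_eulerian C ==> (#|J :&: C|.*2 <= #|C|)%N].

Definition last_edge_cond (J : {set 'I_s}) : bool :=
  [forall C, (even_eulerian C && (#|J :&: C|.*2 == #|C|)) ==>
     [forall i in C, [forall j in C, (j <= i)%N] ==> (i \in J)]].

Definition Jset (d : nat) : {set {set 'I_s}} :=
  [set J | [&& parity_join J, #|J| == d & last_edge_cond J]].

End Defs.

(* Main.v *)
Require Import Defs.
From HB Require Import structures.
From mathcomp Require Import all_boot all_order all_algebra.
From mathcomp Require Import mpoly.
From mathcomp Require Import zify.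
Import GRing.Theory.
Local Open Scope ring_scope.
Set Implicit Arguments. Unset Strict Implicit. Unset Printing Implicit Defensive.

Lemma F3allb : [forall z : K, [|| z == 0, z == 1 | z == -1]].
Proof. by apply/forallP; case=> [[|[|[|]]] //]. Qed.
Lemma F3two : (2%:R : K) != 0. Proof. by []. Qed.
Lemma F3neg : (-1 : K) != 1. Proof. by []. Qed.
Lemma F3sq (z : K) : z != 0 -> z ^+ 2 = 1.
Proof.
by move: (forallP F3allb z) => /or3P [] /eqP -> //; rewrite ?sqrrN expr1n.
Qed.
Lemma F3half (z : K) : z = - z -> z = 0.
Proof.
move=> h; have : (2%:R : K) * z = 0 by rewrite mulr_natl mulr2n {2}h subrr.
by move/eqP; rewrite mulf_eq0 (negbTE F3two) /= => /eqP.
Qed.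

Section Main.
Variables (n s : nat) (E : 'I_s -> {set 'I_n}).
Hypothesis hs : (0 < s)%N.

Definition o0 : 'I_s := Ordinal hs.
Lemma lst_lt : (s.-1 < s)%N. Proof. by rewrite ltn_predL. Qed.
Definition lst : 'I_s := Ordinal lst_lt.

Definition sq1 (P : 'I_s -> K) := forall k, P k ^+ 2 = 1.
Definition pw (P : 'I_s -> K) (e : 'X_{1..s}) : K := \prod_k P k ^+ e k.
Definition mono (A : {set 'I_s}) : 'X_{1..s} := [multinom (i \in A : nat) | i < s].
Definition oddset (e : 'X_{1..s}) : {set 'I_s} := [set i | odd (e i)].
Definition xb (b : {ffun 'I_n -> bool}) : {ffun 'I_n -> K} :=
  [ffun v => if b v then -1 else 1].
Definition Pb b := normalize (monmap E (xb b)).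
Definition cyc (C : {set 'I_s}) := [forall v, ~~ odd (vdeg E C v)].
Definition symd (A B : {set 'I_s}) := (A :\: B) :|: (B :\: A).
Definition good J := parity_join E J && last_edge_cond E J.

Lemma monoE A i : mono A i = (i \in A). Proof. by rewrite mnmE. Qed.

Lemma pwX P e : ('X_[e]).@[P] = pw P e.
Proof. by rewrite mevalX. Qed.

Lemma pw_mul P a b : pw P a * pw P b = pw P (a + b)%MM.
Proof. rewrite /pw -big_split; apply: eq_bigr => i _; by rewrite mnmDE exprD. Qed.

Lemma pw_odd P e : sq1 P -> pw P e = pw P (mono (oddset e)).
Proof.
move=> h; apply: eq_bigr => i _; rewrite monoE inE.
by rewrite -{1}(odd_double_half (e i)) exprD -muln2 mulnC exprM h expr1n mulr1.
Qed.

Lemma coordk0 (v : 'I_s -> K) : coordk v 0 = v o0.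
Proof.
rewrite /coordk; case: insubP => [i _ hi|]; last by rewrite hs.
by congr (v _); apply/val_inj.
Qed.

Lemma tvar_lst : tvar s s.-1 = 'X_lst.
Proof.
rewrite /tvar; case: insubP => [i _ hi|]; last by rewrite lst_lt.
by congr ('X_ _); apply/val_inj.
Qed.

Lemma pw_scale (P : 'I_s -> K) c e : pw (fun k => P k * c) e = pw P e * c ^+ mdeg e.
Proof.
rewrite /pw mdegE -prodrXr -big_split; apply: eq_bigr => i _; by rewrite exprMn.
Qed.

Lemma pw_monmap (x : {ffun 'I_n -> K}) C :
  pw (monmap E x) (mono C) = \prod_v x v ^+ vdeg E C v.
Proof.
rewrite /pw.
transitivity (\prod_k \prod_v (if v \in E k then x v ^+ (k \in C) else 1)).
  apply: eq_bigr => k _; rewrite ffunE monoE -prodrXl big_mkcond /=.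
  by apply: eq_bigr => v _; case: ifP.
rewrite exchange_big /=; apply: eq_bigr => v _.
rewrite -big_mkcond /= prodrXr; congr (_ ^+ _).
rewrite /vdeg -sum1_card big_mkcond /= [RHS]big_mkcond /=.
apply: eq_bigr => k _; rewrite inE; by case: (k \in C); case: (v \in E k).
Qed.


Lemma torus_sq (x : {ffun 'I_n -> K}) : x \in torus n -> forall v, x v ^+ 2 = 1.
Proof. by rewrite inE => /forallP h v; apply: F3sq. Qed.

Lemma xb_torus b : xb b \in torus n.
Proof. by rewrite inE; apply/forallP => v; rewrite ffunE; case: (b v). Qed.

Lemma monmap_sq (x : {ffun 'I_n -> K}) : (forall v, x v ^+ 2 = 1) -> sq1 (monmap E x).
Proof.
move=> h k; rewrite ffunE -prodrXl; by apply: big1 => v _; rewrite h.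
Qed.

Lemma sq1_neq0 (P : 'I_s -> K) k : sq1 P -> P k != 0.
Proof. move=> h; apply/eqP=> e; move: (h k); rewrite e expr0n /= => /eqP; by rewrite eq_sym oner_eq0. Qed.

Lemma sq1_inv (P : 'I_s -> K) k : sq1 P -> (P k)^-1 = P k.
Proof.
move=> h; apply: (mulfI (sq1_neq0 k h)); rewrite mulfV ?sq1_neq0 //.
by rewrite -expr2 h.
Qed.

Lemma pw_normalize (v : {ffun 'I_s -> K}) e :
  pw (normalize v) e = pw v e * (v o0)^-1 ^+ mdeg e.
Proof.
rewrite -pw_scale /pw; apply: eq_bigr => i _; by rewrite ffunE coordk0.
Qed.

Lemma normalize_sq (v : {ffun 'I_s -> K}) : sq1 v -> sq1 (normalize v).
Proof.
move=> h k; rewrite ffunE coordk0 expr_div_n h (h o0) divr1 //.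
Qed.

Lemma normalize_o0 (v : {ffun 'I_s -> K}) : sq1 v -> normalize v o0 = 1.
Proof. move=> h; by rewrite ffunE coordk0 mulfV // sq1_neq0. Qed.

Lemma Xset_sq P : P \in Xset E -> sq1 P.
Proof.
case/imsetP => x hx ->; apply: normalize_sq; apply: monmap_sq; exact: torus_sq.
Qed.

Lemma Xset_o0 P : P \in Xset E -> P o0 = 1.
Proof.
case/imsetP => x hx ->; apply: normalize_o0; apply: monmap_sq; exact: torus_sq.
Qed.

Lemma Pb_in b : Pb b \in Xset E.
Proof. apply: imset_f; exact: xb_torus. Qed.

Lemma mdeg_mono A : mdeg (mono A) = #|A|.
Proof.
rewrite mdegE -sum1_card [RHS]big_mkcond /=; apply: eq_bigr => i _; by rewrite monoE; case: (i \in A).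
Qed.

Lemma pw_mono_sq (P : 'I_s -> K) A : sq1 P -> pw P (mono A) ^+ 2 = 1.
Proof.
move=> h; rewrite /pw -prodrXl; apply: big1 => i _; by rewrite -exprM mulnC exprM h expr1n.
Qed.

Lemma cyc_one (x : {ffun 'I_n -> K}) C : (forall v, x v ^+ 2 = 1) -> cyc C ->
  pw (monmap E x) (mono C) = 1.
Proof.
move=> h /forallP hc; rewrite pw_monmap; apply: big1 => v _.
by rewrite -(odd_double_half (vdeg E C v)) (negbTE (hc v)) add0n -muln2 mulnC exprM h expr1n.
Qed.

Lemma sq_even (c : K) k : c ^+ 2 = 1 -> ~~ odd k -> c ^+ k = 1.
Proof. move=> h hk; by rewrite -(odd_double_half k) (negbTE hk) add0n -muln2 mulnC exprM h expr1n. Qed.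

Lemma pw_X_cyc P C : P \in Xset E -> cyc C -> ~~ odd #|C| -> pw P (mono C) = 1.
Proof.
case/imsetP => x hx -> hc he; rewrite pw_normalize cyc_one ?mul1r //; last exact: torus_sq.
rewrite mdeg_mono; apply: sq_even => //.
by rewrite exprVn (monmap_sq (torus_sq hx)) invr1.
Qed.

Lemma pw_Pb_even b (C : {set 'I_s}) : ~~ odd #|C| -> pw (Pb b) (mono C) = pw (monmap E (xb b)) (mono C).
Proof.
move=> he; rewrite pw_normalize mdeg_mono sq_even ?mulr1 //.
by rewrite exprVn (monmap_sq (torus_sq (xb_torus b))) invr1.
Qed.

Lemma sum_b1 : \sum_(b : {ffun 'I_n -> bool}) (1 : K) = (2 ^ n)%:R.
Proof. by rewrite sumr_const card_ffun card_bool card_ord. Qed.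

Lemma two_pow_neq0 : ((2 ^ n)%:R : K) != 0.
Proof. by rewrite natrX expf_neq0 // F3two. Qed.

Lemma orth (C : {set 'I_s}) : ~~ cyc C -> ~~ odd #|C| ->
  \sum_(b : {ffun 'I_n -> bool}) pw (Pb b) (mono C) = 0.
Proof.
move=> hc he.
under eq_bigr => b _ do rewrite pw_Pb_even // pw_monmap.
move: hc; rewrite negb_forall => /existsP [v0]; rewrite negbK => hv0.
set F := fun b : {ffun 'I_n -> bool} => \prod_v xb b v ^+ vdeg E C v.
pose fl (b : {ffun 'I_n -> bool}) : {ffun 'I_n -> bool} :=
  [ffun v => if v == v0 then ~~ b v else b v].
have flK : involutive fl.
  move=> b; apply/ffunP => v; rewrite !ffunE; case: eqP => // _; by rewrite negbK.
have hF b : F (fl b) = - F b.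
  rewrite /F (bigD1 v0) //= [in RHS](bigD1 v0) //= !ffunE eqxx.
  rewrite -mulNr; congr (_ * _); last first.
    apply: eq_bigr => v hv; by rewrite !ffunE (negbTE hv).
  rewrite -(odd_double_half (vdeg E C v0)) hv0 !exprD !expr1 -!muln2 !(mulnC _ 2) !exprM.
  by case: (b v0) => /=; rewrite ?sqrrN !expr1n !mulr1 ?opprK.
apply: F3half.
rewrite {1}(reindex_inj (can_inj flK)) /= -sumrN.
apply: eq_bigr => b _; exact: (hF b).
Qed.


Lemma card_symd A B : (#|symd A B| + (#|A :&: B|).*2 = #|A| + #|B|)%N.
Proof.
have hd : (A :\: B) :&: (B :\: A) = set0.
  apply/setP => x; rewrite !inE; by case: (x \in A); case: (x \in B).
rewrite /symd cardsU hd cards0 subn0 -(cardsID B A) -(cardsID A B) setIC.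
rewrite -addnn; lia.
Qed.

Lemma odd_card_symd A B : odd #|symd A B| = odd #|A| (+) odd #|B|.
Proof.
have := card_symd A B => /(congr1 odd); rewrite !oddD odd_double addbF => <-.
by [].
Qed.

Lemma vdeg_symd A B v : odd (vdeg E (symd A B) v) = odd (vdeg E A v) (+) odd (vdeg E B v).
Proof.
rewrite /vdeg -odd_card_symd (_ : [set i in symd A B | v \in E i] =
  symd [set i in A | v \in E i] [set i in B | v \in E i]) //.
apply/setP => x; rewrite !inE; by case: (x \in A); case: (x \in B); case: (v \in E x).
Qed.

Lemma cyc_symd A B : cyc A -> cyc B -> cyc (symd A B).
Proof.
move=> /forallP ha /forallP hb; apply/forallP => v.
by rewrite vdeg_symd (negbTE (ha v)) (negbTE (hb v)).
Qed.

Lemma cyc0 : cyc set0.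
Proof. apply/forallP => v; by rewrite /vdeg (_ : [set i in set0 | _] = set0) ?cards0 // -setP => x; rewrite !inE. Qed.

Lemma symdC A B : symd A B = symd B A.
Proof. apply/setP => x; rewrite !inE; by case: (x \in A); case: (x \in B). Qed.
Lemma symdA A B C : symd A (symd B C) = symd (symd A B) C.
Proof. apply/setP => x; rewrite !inE; by case: (x \in A); case: (x \in B); case: (x \in C). Qed.
Lemma symdK A B : symd A (symd A B) = B.
Proof. apply/setP => x; rewrite !inE; by case: (x \in A); case: (x \in B). Qed.
Lemma symdvv A : symd A A = set0.
Proof. apply/setP => x; rewrite !inE; by case: (x \in A). Qed.
Lemma symd0 A : symd A set0 = A.
Proof. apply/setP => x; rewrite !inE; by case: (x \in A). Qed.
Lemma symd_eq0 A B : symd A B = set0 -> A = B.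
Proof. by move=> h; rewrite -(symdK A B) h symd0. Qed.

Lemma oddset_mono A m : oddset (mono A + m)%MM = symd A (oddset m).
Proof.
apply/setP => x; rewrite !inE mnmDE monoE oddD; by case: (x \in A); case: (odd (m x)).
Qed.

Lemma card_oddset_sum e : #|oddset e| = (\sum_i (odd (e i) : nat))%N.
Proof.
rewrite -sum1_card [LHS]big_mkcond /=; apply: eq_bigr => i _; rewrite inE; by case: (odd (e i)).
Qed.

Lemma card_oddset_le e : (#|oddset e| <= mdeg e)%N.
Proof.
rewrite card_oddset_sum mdegE; apply: leq_sum => i _.
by case h: (odd (e i)) => //; case: (e i) h.
Qed.

Lemma odd_sum_odd (I : finType) (F : I -> nat) :
  odd (\sum_i F i) = odd (\sum_i (odd (F i) : nat)).
Proof.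
elim/big_rec2: _ => // i a b _ h; rewrite !oddD h; by case: (odd (F i)).
Qed.

Lemma odd_card_oddset e : odd #|oddset e| = odd (mdeg e).
Proof. by rewrite card_oddset_sum mdegE [RHS]odd_sum_odd. Qed.

Lemma oddset_eq e : #|oddset e| = mdeg e -> e = mono (oddset e).
Proof.
move=> h.
have H : forall i : 'I_s, true -> ((odd (e i) : nat) <= e i ?= iff (odd (e i) == e i :> nat))%N.
  move=> i _; split; last by [].
  by case h': (odd (e i)) => //; case: (e i) h'.
have := leqif_sum H; rewrite -card_oddset_sum -mdegE h => [[_]].
rewrite eqxx => /esym /forallP hh; apply/mnmP => i; rewrite monoE inE.
by move/eqP: (hh i) => ->.
Qed.


Section Good.
Local Open Scope nat_scope.

Lemma pjP J : parity_join E J -> forall C, C != set0 -> cyc C -> ~~ odd #|C| ->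
  #|J :&: C|.*2 <= #|C|.
Proof.
move=> /forallP h C h0 hc he; move/implyP: (h C); apply.
by rewrite /even_eulerian /eulerian h0 he andbT.
Qed.

Lemma leP J : last_edge_cond E J -> forall C, C != set0 -> cyc C -> ~~ odd #|C| ->
  #|J :&: C|.*2 = #|C| -> forall i, i \in C -> (forall j, j \in C -> j <= i) -> i \in J.
Proof.
move=> /forallP h C h0 hc he hh i hi hm; move/implyP: (h C).
have hee : even_eulerian E C by rewrite /even_eulerian /eulerian h0 he andbT.
rewrite hee hh eqxx => /(_ isT) /forall_inP /(_ i hi) /implyP.
apply; apply/forall_inP => j hj; exact: hm.
Qed.

Lemma pjI J : (forall C, C != set0 -> cyc C -> ~~ odd #|C| -> #|J :&: C|.*2 <= #|C|) ->
  parity_join E J.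
Proof.
move=> h; apply/forallP => C; apply/implyP; rewrite /even_eulerian /eulerian.
by case/andP => /andP [h0 hc] he; apply: h.
Qed.

Lemma leI J : (forall C, C != set0 -> cyc C -> ~~ odd #|C| ->
  #|J :&: C|.*2 = #|C| -> forall i, i \in C -> (forall j, j \in C -> j <= i) -> i \in J) ->
  last_edge_cond E J.
Proof.
move=> h; apply/forallP => C; apply/implyP; rewrite /even_eulerian /eulerian.
case/andP => /andP [/andP [h0 hc] he] /eqP hh; apply/forall_inP => i hi; apply/implyP.
move/forall_inP => hm; apply: (h C) => //; exact: hm.
Qed.

Lemma maxC (C : {set 'I_s}) : C != set0 -> exists2 i, i \in C & forall j, j \in C -> j <= i.
Proof.
case/set0Pn => i0 hi0.
case: (@arg_maxnP _ i0 (mem C) (fun i => nat_of_ord i) hi0) => i hi hm.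
by exists i.
Qed.

Lemma pj_ge J C : parity_join E J -> cyc C -> ~~ odd #|C| ->
  #|J| <= #|symd J C| /\ (#|symd J C| = #|J| -> C = set0 \/ #|J :&: C|.*2 = #|C|).
Proof.
move=> hp hc he; have := card_symd J C.
case: (eqVneq C set0) => [-> _|h0].
  by rewrite symd0; split => //; left.
have := pjP hp h0 hc he; split; first by lia.
by move=> ?; right; lia.
Qed.

Lemma good_sub (J J' : {set 'I_s}) : good J -> J' \subset J -> good J'.
Proof.
case/andP => hp hl hs'; have hle : forall C, #|J' :&: C| <= #|J :&: C|.
  by move=> C; apply: subset_leq_card; apply: setSI.
apply/andP; split.
  apply: pjI => C h0 hc he; apply: leq_trans (pjP hp h0 hc he); by rewrite leq_double.
apply: leI => C h0 hc he hh i hi hm.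
have hJ : #|J :&: C|.*2 = #|C|.
  apply/eqP; rewrite eqn_leq pjP //= -hh leq_double; exact: hle.
have hi' := leP hl h0 hc he hJ hi hm.
have : J' :&: C = J :&: C.
  apply/eqP; rewrite eqEcard setSI //=; move: hh hJ => <-; rewrite -!muln2 => /eqP.
  by rewrite eqn_pmul2r // => /eqP ->.
move/setP/(_ i); rewrite !inE hi hi' !andbT => ->; by [].
Qed.

Lemma good_uniq J1 J2 : good J1 -> good J2 -> cyc (symd J1 J2) -> ~~ odd #|symd J1 J2| ->
  J1 = J2.
Proof.
case/andP => hp1 hl1 /andP [hp2 hl2] hc he.
set C := symd J1 J2 in hc he.
case: (eqVneq C set0) => [/symd_eq0 //|h0].
have e1 : J1 :&: C = J1 :\: J2.
  apply/setP => x; rewrite !inE; by case: (x \in J1); case: (x \in J2).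
have e2 : J2 :&: C = J2 :\: J1.
  apply/setP => x; rewrite !inE; by case: (x \in J1); case: (x \in J2).
have ec : #|C| = #|J1 :\: J2| + #|J2 :\: J1|.
  rewrite /C /symd cardsU (_ : (J1 :\: J2) :&: (J2 :\: J1) = set0) ?cards0 ?subn0 //.
  apply/setP => x; rewrite !inE; by case: (x \in J1); case: (x \in J2).
have h1 := pjP hp1 h0 hc he; have h2 := pjP hp2 h0 hc he.
rewrite e1 in h1; rewrite e2 in h2.
have q1 : #|J1 :&: C|.*2 = #|C| by rewrite e1; lia.
have q2 : #|J2 :&: C|.*2 = #|C| by rewrite e2; lia.
case: (maxC h0) => i hi hm.
have := leP hl1 h0 hc he q1 hi hm; have := leP hl2 h0 hc he q2 hi hm.
move: hi; rewrite /C !inE; by case: (i \in J1); case: (i \in J2).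
Qed.

Definition bin (X : {set 'I_s}) := \sum_(i in X) 2 ^ i.

Lemma geo k : \sum_(i < k) 2 ^ i < 2 ^ k.
Proof.
elim: k => [|k ih]; first by rewrite big_ord0.
rewrite big_ord_recr /= expnS; move: ih; set t := 2 ^ k; set u := \sum_(i < k) _; lia.
Qed.

Lemma bin_below (X : {set 'I_s}) k : k <= s -> (forall j, j \in X -> j < k) -> bin X < 2 ^ k.
Proof.
move=> hk h; apply: leq_ltn_trans (geo k).
rewrite (@big_ord_widen_cond _ _ _ k s (fun _ => true) (fun i => 2 ^ i) hk) /bin.
rewrite [X in _ <= X](eq_bigl (fun i : 'I_s => i < k)) //.
rewrite [X in X <= _](bigID (fun i : 'I_s => i < k)) /=.
rewrite [X in _ + X <= _]big1 ?addn0; last first.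
  by move=> i /andP [/h ->].
rewrite big_mkcond [X in _ <= X]big_mkcond /=; apply: leq_sum => i _.
by case: (i \in X); case: (i < k).
Qed.

Lemma bin_lt X : bin X < 2 ^ s.
Proof. apply: bin_below => // j _; exact: ltn_ord. Qed.

Lemma bin_cmp (X Y : {set 'I_s}) (i : 'I_s) : i \in Y -> i \notin X ->
  (forall j : 'I_s, i < j -> (j \in X) = (j \in Y)) -> bin X < bin Y.
Proof.
move=> hY hX h.
rewrite /bin (bigID (fun j : 'I_s => i < j)) [X in _ < X](bigID (fun j : 'I_s => i < j)) /=.
have -> : \sum_(j in X | i < j) 2 ^ j = \sum_(j in Y | i < j) 2 ^ j.
  apply: eq_bigl => j; case: (ltnP i j) => hij; rewrite ?andbT ?andbF //; by rewrite h.
rewrite ltn_add2l.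
have hb : \sum_(j in X | ~~ (i < j)) 2 ^ j < 2 ^ i.
  apply: leq_ltn_trans (bin_below (X := X :&: [set j : 'I_s | j < i]) (ltnW (ltn_ord i)) _).
    rewrite /bin; apply: eq_leq; apply: eq_bigl => j; rewrite !inE -leqNgt ltn_neqAle.
    case hj : (j \in X) => //=; case: (eqVneq (j : nat) i) => [e|] //; move: hX; rewrite (_ : i = j) ?hj //; apply: val_inj; by rewrite /= e.

  by move=> j; rewrite !inE => /andP [].
apply: (leq_trans hb); rewrite (bigD1 i) /=; last by rewrite hY ltnn.
exact: leq_addr.
Qed.

Definition key (J : {set 'I_s}) := #|J| * 2 ^ s + bin (~: J).

Lemma good_exists A : exists J, [/\ good J, cyc (symd A J), ~~ odd #|symd A J| & #|J| <= #|A|].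
Proof.
pose P := [set J | cyc (symd A J) && ~~ odd #|symd A J|].
have hA : A \in P by rewrite inE symdvv cyc0 cards0.
case: (@arg_minnP _ A (mem P) key hA) => J hJ hmin; move: hJ; rewrite !inE => /andP [hc he].
have hP : forall C, cyc C -> ~~ odd #|C| -> symd J C \in P.
  move=> C hc' he'; rewrite inE symdA cyc_symd //= odd_card_symd odd_card_symd.
  by move: he he'; rewrite odd_card_symd; case: (odd #|A|); case: (odd #|J|); case: (odd #|C|).
have hb1 := bin_lt (~: J); have hpos : 0 < 2 ^ s by rewrite expn_gt0.
exists J; split => //.
- apply/andP; split.
  + apply: pjI => C h0 hc' he'; rewrite leqNgt; apply/negP => hlt.
    have := hmin _ (hP C hc' he'); rewrite /key.
    have := card_symd J C; have := bin_lt (~: symd J C).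
    move=> hb2 hcs hk.
    have : #|symd J C| < #|J| by lia.
    move=> hlt2; have : (#|symd J C|).+1 * 2 ^ s <= #|J| * 2 ^ s by rewrite leq_mul2r hlt2 orbT.
    rewrite mulSn; lia.
  + apply: leI => C h0 hc' he' hh i hi hm; apply/negPn/negP => hiJ.
    have := hmin _ (hP C hc' he'); rewrite /key.
    have := card_symd J C => hcs.
    have -> : #|symd J C| = #|J| by lia.
    rewrite leq_add2l leqNgt => /negP; apply.
    apply: (bin_cmp (i := i)).
    * by rewrite inE.
    * by rewrite !inE hiJ hi.
    * move=> j hij; rewrite !inE.
      have : j \notin C by apply/negP => /hm; rewrite leqNgt hij.
      by move/negbTE => ->; rewrite andbF orbF.
- have := hmin A hA; rewrite /key => hk.
  have hbA := bin_lt (~: A).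
  rewrite leqNgt; apply/negP => hlt.
  have : (#|A|).+1 * 2 ^ s <= #|J| * 2 ^ s by rewrite leq_mul2r hlt orbT.
  rewrite mulSn; lia.
Qed.

End Good.


Lemma grev_asym (a b : 'X_{1..s}) : grevlex_lt a b -> grevlex_lt b a -> False.
Proof.
case=> [h1|[e1 [k1 [hk1 ha1]]]] [h2|[e2 [k2 [hk2 ha2]]]]; try lia.
case: (ltngtP k1 k2) => hk.
- by have := ha1 _ hk; lia.
- by have := ha2 _ hk; lia.
- have e : k1 = k2 by apply: val_inj.
  by subst; lia.
Qed.

Lemma grev_symd (J C : {set 'I_s}) (i : 'I_s) : i \in C -> i \in J -> (forall j, j \in C -> (j <= i)%N) ->
  #|symd J C| = #|J| -> grevlex_lt (mono J) (mono (symd J C)).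
Proof.
move=> hiC hiJ hm hc; right; split; first by rewrite !mdeg_mono.
exists i; split; first by rewrite !monoE !inE hiC hiJ.
move=> j hij; rewrite !monoE !inE.
have : j \notin C by apply/negP => /hm; rewrite leqNgt hij.
by move/negbTE => ->; case: (j \in J).
Qed.

Lemma Wsum (J : {set 'I_s}) (m : 'X_{1..s}) : good J ->
  ((mdeg m < #|J|)%N /\ odd (mdeg m) = odd #|J| \/
   (mdeg m = #|J| /\ m <> mono J /\ grevlex_lt m (mono J))) ->
  \sum_(b : {ffun 'I_n -> bool}) pw (Pb b) (mono J) * pw (Pb b) m = 0.
Proof.
move=> hg hcase.
under eq_bigr => b _ do rewrite pw_mul (pw_odd _ (Xset_sq (Pb_in b))) oddset_mono.
set C := symd J (oddset m).
have he : ~~ odd #|C|.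
  rewrite /C odd_card_symd odd_card_oddset.
  case: hcase => [[_ ->]|[-> _]]; by case: (odd _).
case hc: (cyc C); last by apply: orth => //; rewrite hc.
exfalso; case/andP: (hg) => hp hl.
have eO : oddset m = symd J C by rewrite /C symdK.
have [hge hq] := pj_ge hp hc he.
have hle := card_oddset_le m.
case: hcase => [[h1 _]|[h1 [h2 h3]]]; first by rewrite -eO in hge; lia.
have hO : #|oddset m| = mdeg m by rewrite -eO in hge; lia.
have em := oddset_eq hO.
rewrite -eO in hq; case: (hq ltac:(lia)) => [h0|htie].
  by apply: h2; rewrite em eO h0 symd0.
have h0 : C != set0.
  apply/eqP => h0; move: htie; rewrite h0 cards0 /=; by move=> _; apply: h2; rewrite em eO h0 symd0.
case: (maxC h0) => i hi hm.
have hiJ := leP hl h0 hc he htie hi hm.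
have := grev_symd hi hiJ hm; rewrite -eO -em => /(_ ltac:(lia)).
exact: grev_asym.
Qed.


Lemma ph_prod (p q : {mpoly K[s]}) e D : q \is e.-homog ->
  exists r, pihomog mdeg D (p * q) = r * q /\ (forall m, m \in msupp r -> (mdeg m + e)%N = D).
Proof.
move=> hq.
pose k := mmeasure mdeg p.
pose r := \sum_(d < k) (if (d + e == D)%N then pihomog mdeg d p else 0).
exists r; split.
  rewrite {1}(pihomog_partitionE (leqnn k)) mulr_suml raddf_sum /= /r mulr_suml.
  apply: eq_bigr => d _.
  have hh : pihomog mdeg d p * q \is (d + e).-homog by apply: dhomogM => //; exact: pihomogP.
  case: eqP => [<-|hne]; first by rewrite pihomog_dE.
  rewrite mul0r; apply: pihomog_ne0 hh; by apply/eqP.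
case: (leqP e D) => heD.
  have : r \is (D - e).-homog.
    apply: rpred_sum => d _; case: eqP => [hd|]; last by rewrite rpred0.
    by rewrite (_ : (D - e = d)%N); [exact: pihomogP | lia].
  move/dhomogP => h m /h ->; lia.
have -> : r = 0.
  apply: big1 => d _; case: eqP => // h; lia.
by rewrite msupp0.
Qed.

Lemma is_homogP e (p : {mpoly K[s]}) : is_homog e p -> p \is e.-homog.
Proof. move=> h; apply/dhomogP => m hm; exact: h m hm. Qed.

Lemma evalX2 (P : 'I_s -> K) : sq1 P -> (('X_lst : {mpoly K[s]}) ^+ 2).@[P] = 1.
Proof. by move=> h; rewrite expr2 mevalM mevalXU -expr2 h. Qed.

Lemma Bd_mono J : good J -> Bd E #|J| (mono J).
Proof.
move=> hg; split; first exact: mdeg_mono.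
move=> [f [lm [hf [hf0 [[hlmS hlm] hdiv]]]]].
pose J' := [set k | (0 < lm k)%N].
have elm : lm = mono J'.
  apply/mnmP => k; rewrite monoE inE; have := hdiv k; rewrite monoE.
  by case: (k \in J); case: (lm k) => [|[]].
have hsub : J' \subset J.
  apply/subsetP => k; rewrite inE => h; have := hdiv k; rewrite monoE.
  by case: (k \in J) => //; rewrite leqNgt h.
have hg' := good_sub hg hsub.
set D := #|J'|.
pose Lam g := \sum_(b : {ffun 'I_n -> bool}) pw (Pb b) (mono J') * (pihomog mdeg D g).@[Pb b].
have H0 : Lam f = 0.
  case: hf => gh [g0 [hgh ->]].
  rewrite /Lam; under eq_bigr => b _ do rewrite raddfD raddf_sum /= mevalD raddf_sum /=.
  have h1 : ('X_lst : {mpoly K[s]}) \is 1.-homog by rewrite dhomogX; apply/eqP; exact: mdeg1.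
  have h2 : tvar s s.-1 ^+ 2 \is 2.-homog by rewrite tvar_lst; exact: dhomogMn h1.
  have [r0 [er0 hr0]] := @ph_prod g0 (tvar s s.-1 ^+ 2) 2 D h2.
  transitivity (\sum_(b : {ffun 'I_n -> bool}) pw (Pb b) (mono J') * r0.@[Pb b]).
    apply: eq_bigr => b _; congr (_ * _).
    rewrite big1_seq ?add0r; last first.
      move=> p /andP [_ hp]; have [[e he] hv] := hgh p hp.
      have [r [-> _]] := @ph_prod p.1 p.2 e D (is_homogP he).
      by rewrite mevalM hv ?mulr0 // Pb_in.
    rewrite er0 mevalM tvar_lst evalX2 ?mulr1 //; apply: Xset_sq; exact: Pb_in.
  under eq_bigr => b _ do rewrite mevalE mulr_sumr.
  rewrite exchange_big /=; apply: big1_seq => m /andP [_ hm].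
  under eq_bigr => b _ do rewrite mulrCA.
  rewrite -mulr_sumr.
  under eq_bigr => b _ do rewrite -mevalX pwX.
  rewrite Wsum ?mulr0 //; left.
  have h := hr0 m hm; rewrite -/D -h; split; first lia.
  by rewrite oddD addbF.
have H1 : Lam f = f@_lm * (2 ^ n)%:R.
  have hD : mdeg lm == D by rewrite elm mdeg_mono.
  transitivity (\sum_(m <- msupp f) \sum_(b : {ffun 'I_n -> bool})
     pw (Pb b) (mono J') * (if mdeg m == D then f@_m * pw (Pb b) m else 0)).
    rewrite [RHS]exchange_big /=; apply: eq_bigr => b _.
    rewrite pihomogE big_mkcond raddf_sum mulr_sumr /=; apply: eq_bigr => m _.
    by case: ifP => _; rewrite ?mevalZ ?pwX ?meval0.
  rewrite (bigD1_seq lm hlmS (msupp_uniq f)) /= hD.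
  rewrite [X in _ + X]big1_seq ?addr0; last first.
    move=> m /andP [hne hm]; case hmD: (mdeg m == D); last first.
      by apply: big1 => b _; rewrite mulr0.
    under eq_bigr => b _ do rewrite mulrCA.
    rewrite -mulr_sumr.
    rewrite Wsum ?mulr0 //; right; split; first by apply/eqP.
    split; first by rewrite -elm; apply/eqP.
    rewrite -elm; apply: hlm => //; exact/eqP.
  have hsq b : pw (Pb b) (mono J') * pw (Pb b) lm = 1.
    rewrite elm -expr2 pw_mono_sq //; apply: Xset_sq; exact: Pb_in.
  transitivity (f@_lm * \sum_(b : {ffun 'I_n -> bool}) 1); last by rewrite sum_b1.
  rewrite mulr_sumr; apply: eq_bigr => b _; by rewrite mulrCA hsq.
move: H0; rewrite H1 => /eqP; rewrite mulf_eq0 (negbTE two_pow_neq0) orbF => /eqP h0.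
by move: hlmS; rewrite mcoeff_msupp h0 eqxx.
Qed.


Lemma binom_coef (a b m : 'X_{1..s}) :
  ('X_[a] - 'X_[b] : {mpoly K[s]})@_m != 0 -> m = a \/ m = b.
Proof.
rewrite mcoeffB !mcoeffX.
case: (eqVneq a m) => [->|ham]; first by left.
case: (eqVneq b m) => [->|hbm]; first by right.
by rewrite ?(negbTE ham) ?(negbTE hbm) subrr eqxx.
Qed.

Lemma binom_ok (a b : 'X_{1..s}) : mdeg a = mdeg b -> cyc (oddset (a + b)%MM) ->
  is_homog (mdeg a) ('X_[a] - 'X_[b] : {mpoly K[s]}) /\ vanishes_on_X E ('X_[a] - 'X_[b]).
Proof.
move=> hd hc; split.
  move=> m; rewrite mcoeff_msupp => /binom_coef [->|->] //.
move=> P hP; rewrite mevalB !pwX.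
have hsq := Xset_sq hP.
have h1 : pw P a * pw P b = 1.
  rewrite pw_mul pw_odd // pw_X_cyc //.
  by rewrite odd_card_oddset mdegD hd addnn odd_double.
have h2 : pw P b ^+ 2 = 1 by rewrite pw_odd // pw_mono_sq.
apply/eqP; rewrite subr_eq0; apply/eqP.
by rewrite -[pw P a]mulr1 -h2 expr2 mulrA h1 mul1r.
Qed.

Lemma notBd_binom d (a b m : 'X_{1..s}) : mdeg a = mdeg b -> cyc (oddset (a + b)%MM) ->
  a <> b -> grevlex_lt b a -> mdivides a m -> ~ Bd E d m.
Proof.
move=> hd hc hab hlt hdiv [_ hB]; apply: hB.
have [hh hv] := binom_ok hd hc.
exists ('X_[a] - 'X_[b]), a; split.
  exists [:: (1, 'X_[a] - 'X_[b])], 0; split.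
    by move=> p; rewrite inE => /eqP -> /=; split => //; exists (mdeg a).
  by rewrite big_seq1 /= mul1r mul0r addr0.
have ha : ('X_[a] - 'X_[b] : {mpoly K[s]})@_a != 0.
  rewrite mcoeffB !mcoeffX eqxx.
  case: (eqVneq b a) => [e|_]; first by exfalso; apply: hab.
  by rewrite subr0 oner_neq0.
split.
  by apply/negP => /eqP h; move: ha; rewrite h mcoeff0 eqxx.
split => //; split; first by rewrite mcoeff_msupp.
move=> m'; rewrite mcoeff_msupp => /binom_coef [->|->] //.
Qed.

Lemma notBd_sq d (m : 'X_{1..s}) (i : 'I_s) : (2 <= m i)%N -> ~ Bd E d m.
Proof.
move=> hi [_ hB]; apply: hB.
pose a := (U_(i) *+ 2)%MM; pose b := (U_(lst) *+ 2)%MM.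
have hd : mdeg a = mdeg b by rewrite !mdegMn !mdeg1.
have hc : cyc (oddset (a + b)%MM).
  rewrite (_ : oddset _ = set0) ?cyc0 //; apply/setP => k.
  by rewrite !inE mnmDE !mulmnE !muln2 oddD !odd_double.
have [hh hv] := binom_ok hd hc.
exists 'X_[a], a; split.
  exists [:: (1, 'X_[a] - 'X_[b])], 1; split.
    by move=> p; rewrite inE => /eqP -> /=; split => //; exists (mdeg a).
  by rewrite big_seq1 /= !mul1r tvar_lst mpolyXn subrK.
split.
  have hX : ('X_[a] : {mpoly K[s]})@_a != 0 by rewrite mcoeffX eqxx oner_neq0.
  by apply/negP => /eqP h; move: hX; rewrite h mcoeff0 eqxx.
split.
  split; first by rewrite msuppX inE.
  by move=> m'; rewrite msuppX inE => /eqP.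
move=> k; rewrite mulmnE mnm1E; case: eqP => [<-|] //=.
Qed.

Lemma Bd_sqfree d (m : 'X_{1..s}) : Bd E d m -> forall i, (m i <= 1)%N.
Proof.
move=> hB i; rewrite leqNgt; apply/negP => h; exact: (notBd_sq h hB).
Qed.

Lemma Bd_mono_eq d (m : 'X_{1..s}) : Bd E d m -> m = mono (suppset m).
Proof.
move=> hB; apply/mnmP => i; rewrite monoE inE.
by have := Bd_sqfree hB i; case: (m i) => [|[]].
Qed.

Lemma lst_max (j : 'I_s) : (lst < j)%N -> False.
Proof. rewrite /lst /= => h; have := ltn_ord j; lia. Qed.

Lemma Bd_good d (m : 'X_{1..s}) : Bd E d m -> good (suppset m).
Proof.
move=> hB; have em := Bd_mono_eq hB; set J := suppset m in em *.
have hdiv : forall A : {set 'I_s}, A \subset J -> mdivides (mono A) m.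
  move=> A hA k; rewrite em !monoE; case hk: (k \in A) => //.
  by rewrite (subsetP hA k hk).
have hcard (C : {set 'I_s}) : (#|J :&: C| + #|C :\: J| = #|C|)%N.
  by rewrite setIC cardsID.
apply/andP; split.
- apply: pjI => C h0 hc he; rewrite leqNgt; apply/negP => hlt; have hC := hcard C.
  set a := mono (J :&: C).
  set c := (#|J :&: C| - #|C :\: J|)%N.
  set b := (mono (C :\: J) + U_(lst) *+ c)%MM.
  have hce : ~~ odd c.
    have hle : (#|C :\: J| <= #|J :&: C|)%N by lia.
    by move: he; rewrite -(hcard C) /c oddB // oddD.
  have hc2 : (2 <= c)%N.
    have : (0 < c)%N by rewrite /c; lia.
    by case: (c) hce => [|[]].
  have hd : mdeg a = mdeg b.
    rewrite /a /b mdegD mdegMn mdeg1 !mdeg_mono /c; lia.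
  have hoc : oddset (a + b)%MM = C.
    apply/setP => k; rewrite !inE mnmDE mnmDE !monoE mulmnE mnm1E !inE.
    rewrite !oddD oddM (negbTE hce) andbF addbF; by case: (0 < m k)%N; case: (k \in C).
  apply: (notBd_binom (a := a) (b := b) _ _ _ _ _ hB).
  + exact: hd.
  + by rewrite hoc.
  + move=> e; have := congr1 (fun x : 'X_{1..s} => x lst) e.
    rewrite /a /b mnmDE !monoE mulmnE mnm1E eqxx mul1n; case: (lst \in J :&: C); case: (lst \in C :\: J) => /=; lia.
  + right; split; first by [].
    exists lst; split.
      rewrite /a /b mnmDE !monoE mulmnE mnm1E eqxx mul1n; case: (lst \in J :&: C); case: (lst \in C :\: J) => /=; lia.
    by move=> j /lst_max.
  + apply: hdiv; exact: subsetIl.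
- apply: leI => C h0 hc he hh i hi hm; apply/negPn/negP => hiJ.
  have hiJ' : (0 < m i)%N = false by move: hiJ; rewrite inE => /negbTE.
  set a := mono (J :&: C); set b := mono (C :\: J).
  have hd : mdeg a = mdeg b.
    rewrite /a /b !mdeg_mono; have := hcard C; lia.
  have hoc : oddset (a + b)%MM = C.
    apply/setP => k; rewrite !inE mnmDE !monoE !inE.
    by case: (0 < m k)%N; case: (k \in C).
  apply: (notBd_binom (a := a) (b := b) _ _ _ _ _ hB).
  + exact: hd.
  + by rewrite hoc.
  + move=> e; have := congr1 (fun x : 'X_{1..s} => x i) e.
    by rewrite /a /b !monoE !inE hi hiJ'.
  + right; split; first by [].
    exists i; split; first by rewrite /a /b !monoE !inE hi hiJ'.
    move=> j hij; rewrite /a /b !monoE !inE.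
    have : j \notin C by apply/negP => /hm; rewrite leqNgt hij.
    by move/negbTE => ->; rewrite !andbF.
  + apply: hdiv; exact: subsetIl.
Qed.


Definition vrow (e : 'X_{1..s}) : 'rV[K]_#|Xset E| := \row_i pw (Xpt (E := E) i) e.

Lemma Xpt_in i : Xpt (E := E) i \in Xset E.
Proof. exact: enum_valP. Qed.

Lemma evrow_X d m : evrow E d 'X_[m] = vrow m.
Proof.
apply/rowP => i; rewrite !mxE coordk0 Xset_o0 ?Xpt_in // expr1n divr1; exact: pwX.
Qed.

Lemma oddset_mono0 A : oddset (mono A) = A.
Proof. apply/setP => k; rewrite inE monoE; by case: (k \in A). Qed.

Lemma vrow_odd m : vrow m = vrow (mono (oddset m)).
Proof. apply/rowP => i; rewrite !mxE; apply: pw_odd; apply: Xset_sq; exact: Xpt_in. Qed.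

Lemma pw_symd P A B : sq1 P -> pw P (mono A) * pw P (mono B) = pw P (mono (symd A B)).
Proof. by move=> h; rewrite pw_mul pw_odd // oddset_mono oddset_mono0. Qed.

Lemma vrow_eq A B : cyc (symd A B) -> ~~ odd #|symd A B| -> vrow (mono A) = vrow (mono B).
Proof.
move=> hc he; apply/rowP => i; rewrite !mxE.
have hP := Xpt_in i; have hsq := Xset_sq hP.
have h1 := pw_symd A B hsq; rewrite [X in _ = X]pw_X_cyc // in h1.
have h2 : pw (Xpt i) (mono B) ^+ 2 = 1 by rewrite pw_mono_sq.
by rewrite -[pw _ (mono A)]mulr1 -h2 expr2 mulrA h1 mul1r.
Qed.

Section Dim.
Variable d : nat.

Definition Gset := [set J : {set 'I_s} | [&& good J, (#|J| <= d)%N & odd #|J| == odd d]].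

Lemma monos_mem (m : 'X_{1..s}) : mdeg m = d -> m \in monos s d.
Proof.
move=> hm; have hb : (mdeg m < d.+1)%N by rewrite hm.
apply/mapP; exists (BMultinom hb) => //.
by rewrite mem_filter /= hm eqxx mem_enum inE.
Qed.

Lemma monos_deg (m : 'X_{1..s}) : m \in monos s d -> mdeg m = d.
Proof. by case/mapP => bm; rewrite mem_filter => /andP [/eqP h _] ->. Qed.

Lemma CX_eq : CX E d = <<[seq vrow (mono J) | J <- enum Gset]>>%VS.
Proof.
apply/eqP; rewrite eqEsubv; apply/andP; split; apply: sub_span.
- move=> v /mapP [m hm ->]; rewrite evrow_X vrow_odd.
  have [J [hg hc he hle]] := good_exists (oddset m).
  rewrite (vrow_eq hc he); apply/mapP; exists J => //.
  rewrite mem_enum inE hg /=.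
  have hdm := monos_deg hm.
  have hl2 := card_oddset_le m.
  apply/andP; split; first by rewrite -hdm; exact: leq_trans hle hl2.
  move: he; rewrite odd_card_symd odd_card_oddset hdm.
  by case: (odd #|J|); case: (odd d).
- move=> v /mapP [J hJ ->].
  move: hJ; rewrite mem_enum inE => /and3P [hg hle /eqP hpar].
  pose mJ := (mono J + U_(o0) *+ (d - #|J|))%MM.
  have hev : ~~ odd (d - #|J|) by rewrite oddB // hpar addbb.
  have -> : vrow (mono J) = evrow E d 'X_[mJ].
    rewrite evrow_X [RHS]vrow_odd; congr (vrow (mono _)).
    rewrite oddset_mono; apply/setP => k; rewrite !inE mulmnE mnm1E oddM (negbTE hev) andbF.
    by case: (k \in J).
  apply/mapP; exists mJ => //; apply: monos_mem.
  rewrite mdegD mdegMn mdeg1 mdeg_mono; lia.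
Qed.

Lemma Gset_free : free [seq vrow (mono J) | J <- enum Gset].
Proof.
set S := [seq vrow (mono J) | J <- enum Gset].
apply/freeP => k hk i0.
have hsz (i : 'I_#|Gset|) : (i < size (enum Gset))%N by rewrite -cardE; exact: ltn_ord.
pose Js (i : 'I_#|Gset|) := nth set0 (enum Gset) i.
have hSi (i : 'I_#|Gset|) : S`_i = vrow (mono (Js i)).
  by rewrite (nth_map set0) // hsz.
have hJin (i : 'I_#|Gset|) : Js i \in Gset.
  rewrite -mem_enum; apply: mem_nth; exact: hsz.
pose rk b := enum_rank_in (Pb_in b) (Pb b).
have hrk b : Xpt (E := E) (rk b) = Pb b by rewrite /Xpt enum_rankK_in // Pb_in.
pose L (r : 'rV[K]_#|Xset E|) := \sum_(b : {ffun 'I_n -> bool}) pw (Pb b) (mono (Js i0)) * r 0 (rk b).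
have hL0 : L (\sum_(i < #|Gset|) k i *: S`_i) = 0.
  by rewrite hk /L; apply: big1 => b _; rewrite mxE mulr0.
have hLS (i : 'I_#|Gset|) : L (vrow (mono (Js i))) = if i == i0 then (2 ^ n)%:R else 0.
  transitivity (\sum_(b : {ffun 'I_n -> bool}) pw (Pb b) (mono (symd (Js i0) (Js i)))).
    apply: eq_bigr => b _; rewrite mxE hrk pw_symd //; apply: Xset_sq; exact: Pb_in.
  case: eqP => [->|hne] /=.
    rewrite symdvv -sum_b1; apply: eq_bigr => b _; rewrite pw_X_cyc ?Pb_in ?cyc0 ?cards0 //.
  have hG0 := hJin i0; have hG1 := hJin i.
  move: hG0 hG1; rewrite !inE => /and3P [hg0 _ /eqP hp0] /and3P [hg1 _ /eqP hp1].
  have he : ~~ odd #|symd (Js i0) (Js i)| by rewrite odd_card_symd hp0 hp1 addbb.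
  case hc: (cyc (symd (Js i0) (Js i))); last by apply: orth => //; rewrite hc.
  exfalso; apply: hne; have e := good_uniq hg0 hg1 hc he.
  apply: val_inj; apply/eqP; rewrite -(nth_uniq set0 (hsz i) (hsz i0) (enum_uniq _)).
  by rewrite -/(Js i) -/(Js i0) e.
have hlin : L (\sum_(i < #|Gset|) k i *: S`_i) = \sum_(i < #|Gset|) k i * L (S`_i).
  rewrite /L; under eq_bigr => b _ do rewrite summxE mulr_sumr.
  rewrite exchange_big /=; apply: eq_bigr => i _; rewrite mulr_sumr.
  apply: eq_bigr => b _; by rewrite mxE mulrCA.
move: hL0; rewrite hlin (bigD1 i0) //= big1 ?addr0; last first.
  by move=> i hi; rewrite hSi hLS (negbTE hi) mulr0.
rewrite hSi hLS eqxx => /eqP; rewrite mulf_eq0 (negbTE two_pow_neq0) orbF.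
by move/eqP.
Qed.



Lemma cardG : #|Gset| = (\sum_(i < d./2.+1) #|Jset E (d - i.*2)|)%N.
Proof.
transitivity (\sum_(J : {set 'I_s}) \sum_(i < d./2.+1) ((J \in Jset E (d - i.*2)) : nat))%N.
  rewrite -sum1_card big_mkcond /=; apply: eq_bigr => J _.
  rewrite inE /good.
  case hp: (parity_join E J); case hl: (last_edge_cond E J) => /=; last 3 first.
  - by rewrite big1 // => i _; rewrite inE hp hl /= ?andbF.
  - by rewrite big1 // => i _; rewrite inE hp hl /= ?andbF.
  - by rewrite big1 // => i _; rewrite inE hp hl /= ?andbF.
  under eq_bigr => i _ do rewrite inE hp hl andbT /=.
  case: ifP => hc.
    case/andP: hc => hle /eqP hpar.
    have hev : ~~ odd (d - #|J|) by rewrite oddB // hpar addbb.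
    have hi0 : ((d - #|J|)./2 < d./2.+1)%N by lia.
    rewrite (bigD1 (Ordinal hi0)) //= big1 ?addn0.
      by have -> : (#|J| == d - ((d - #|J|)./2).*2)%N by apply/eqP; move: hev hle; set x := #|J|; lia.
    move=> i hi; apply/eqP; rewrite eqb0; apply/negP => /eqP he.
    move/negP: hi; apply; apply/eqP; apply: val_inj => /=.
    have := ltn_ord i; lia.
  rewrite big1 // => i _; apply/eqP; rewrite eqb0; apply/negP => /eqP he.
  have hi := ltn_ord i.
  have h2 : (i.*2 <= d)%N by lia.
  by move: hc; rewrite he leq_subr /= oddB // odd_double addbF eqxx.
rewrite exchange_big /=; apply: eq_bigr => i _.
by rewrite -sum1_card [RHS]big_mkcond /=.
Qed.

End Dim.

End Main.

Unset Implicit Arguments.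

Theorem theorem2p4 (n s : nat) (E : 'I_s -> {set 'I_n})
  (hs : (0 < s)%N) (hE2 : forall i, #|E i| = 2%N) (hEinj : injective E)
  (d : nat) :
  (forall m, Bd E d m -> suppset m \in Jset E d) /\
  (forall m1 m2, Bd E d m1 -> Bd E d m2 -> suppset m1 = suppset m2 -> m1 = m2) /\
  (forall J, J \in Jset E d -> exists m, Bd E d m /\ suppset m = J) /\
  \dim (CX E d) = (\sum_(i < d./2.+1) #|Jset E (d - i.*2)|)%N.
Proof.
split.
  move=> m hB; have := Bd_good hs hB; case/andP => hp hl.
  rewrite inE hp hl andbT /=; apply/eqP.
  have em := Bd_mono_eq hs hB; case: hB => hd _.
  by rewrite -hd {2}em mdeg_mono.
split.
  move=> m1 m2 h1 h2 he.
  by rewrite (Bd_mono_eq hs h1) (Bd_mono_eq hs h2) he.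
split.
  move=> J; rewrite inE => /and3P [hp /eqP hc hl].
  exists (mono J); split.
    rewrite -hc; apply: Bd_mono => //; by rewrite /good hp hl.
  by apply/setP => k; rewrite inE monoE; case: (k \in J).
rewrite (CX_eq E hs d).
have := Gset_free E hs d; rewrite /free => /eqP ->.
by rewrite size_map -cardE cardG.
Qed.
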